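(* Let $q,r,\nu$ be positive integers. The subspace of vectors $x\in\mathbb{C}^{\nu r}$ (not depending on $z$) with $\mathcal{M}^0(z)x=0$ for all $z$, i.e. $\bigcap_z\ker\mathcal{M}^0(z)$, has dimension $(\nu-q)^+r$. This subspace equals the kernel of $\mathcal{M}(z)$ for $\mu=r$, which is the same for all $z$.
   Context: Matrix indices start at $0$. $u(z)=(1,\dots,z^{q-1})^\top$, $w(z)=(1,\dots,z^{r-1})$, $M(z)=u(z)w(z)$. $\mathcal{M}^0(z)=(M(z),M'(z),\dots,M^{(\nu-1)}(z))\in\mathbb{C}^{q\times\nu r}$, and, for a positive integer $\mu$, $\mathcal{M}(z)\in\mathbb{C}^{\mu q\times\nu r}$ is the block matrix with $(i,j)$ block $M^{(i+j)}(z)$, $i=0,\dots,\mu-1$, $j=0,\dots,\nu-1$. *)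

(* Defs.v *)
From mathcomp Require Import all_boot all_order all_algebra.
From mathcomp Require Import all_classical all_reals.
From mathcomp.real_closed Require Import complex.
Set Implicit Arguments. Unset Strict Implicit. Unset Printing Implicit Defensive.
Import Order.TTheory GRing.Theory Num.Theory.
Local Open Scope ring_scope.

Definition Cplx (R : realType) : fieldType := R[i].

Section Defs.
Variables (F : fieldType) (q r nu : nat).

(* entry (a,c) of the k-th derivative M^(k)(z) of M(z) = u(z) w(z), whose
   (a,c) entry is z^(a+c); derivative taken via the formal derivative *)
Definition mder (k a c : nat) (z : F) : F := (('X^(a + c) : {poly F})^`(k)).[z].
Definition Mder (k : nat) (z : F) : 'M[F]_(q, r) :=
  \matrix_(a < q, c < r) mder k a c z.

(* M^0(z) = (M(z), M'(z), ..., M^(nu-1)(z)) in F^{q x nu r};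
   column index j*r + c  <->  block j, column c *)
Definition Mcal0 (z : F) : 'M[F]_(q, nu * r) :=
  \matrix_(a < q, col < nu * r) mder (col %/ r) a (col %% r) z.

(* Mcal(z) in F^{mu q x nu r}: block (i,j) is M^(i+j)(z);
   row index i*q + a, column index j*r + c *)
Definition Mcal (mu : nat) (z : F) : 'M[F]_(mu * q, nu * r) :=
  \matrix_(row < mu * q, col < nu * r)
     mder (row %/ q + col %/ r) (row %% q) (col %% r) z.
End Defs.

(* Main.v *)
Require Import Defs.
From mathcomp Require Import all_boot all_order all_algebra.
From mathcomp Require Import all_classical all_reals.
From mathcomp.real_closed Require Import complex.
Import Order.TTheory GRing.Theory Num.Theory.
Local Open Scope ring_scope.
Set Implicit Arguments. Unset Strict Implicit.

Section L.
Variable F : fieldType.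
Implicit Types f g : {poly F}.

Lemma leibniz f g j : (f * g)^`(j) =
  \sum_(m < j.+1) 'C(j, m)%:R *: (f^`(m) * g^`(j - m)).
Proof.
elim: j => [|j IH].
  by rewrite big_ord1 !derivn0 bin0 scale1r.
rewrite derivnS IH raddf_sum /=.
under eq_bigr => m _ do rewrite derivZ derivM -!derivnS scalerDr.
rewrite big_split /=.
rewrite [in RHS]big_ord_recl bin0 scale1r subn0.
under [in RHS]eq_bigr => i _ do rewrite /bump /= binS natrD scalerDl.
rewrite big_split /= addrA addrC; congr (_ + _).
rewrite big_ord_recl bin0 scale1r subn0 -derivnS [in RHS]big_ord_recr /=.
rewrite bin_small // scale0r addr0; congr (_ + _).
apply: eq_bigr => i _; rewrite /bump /= -!derivnS subSS add1n -subSn //.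
Qed.

Lemma leibXa a g j B : (j < B)%N -> ('X^a * g)^`(j) =
  \sum_(m < B) ('C(j, m) * a ^_ m)%:R *: ('X^(a - m) * g^`(j - m)).
Proof.
move=> jB; rewrite leibniz (big_ord_widen B (fun m => 'C(j, m)%:R *: (('X^a)^`(m) * g^`(j - m)))) //.
rewrite big_mkcond /=; apply: eq_bigr => m _.
case: ifP => [_|/negbT]; last first.
  by rewrite -leqNgt => Hm; rewrite bin_small // mul0n scale0r.
by rewrite derivnXn mulrnAl -scaler_nat scalerA natrM.
Qed.

Lemma derivn_comp f i j : (f^`(j))^`(i) = f^`(i + j).
Proof. by rewrite /derivn iterD. Qed.

Lemma taylor f n z : (size f <= n)%N ->
  (forall i, (i < n)%N -> (f^`(i)).[z] = 0) ->
  (forall n, (n.+1%:R : F) != 0) -> f = 0.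
Proof.
move=> + + F0; elim: n f => [|n IH] f Hs Hd.
  by apply/size_poly_leq0P.
have Hd' : f^`() = 0.
  apply: IH => [|i Hi]; last by rewrite -derivSn; apply: Hd.
  have [->|nz] := eqVneq f 0; first by rewrite deriv0 size_poly0.
  by rewrite -ltnS; apply: leq_trans (lt_size_deriv nz) Hs.
have Hf : f = (f`_0)%:P.
  apply/polyP => i; rewrite coefC; case: i => [//|i] /=.
  move/polyP: Hd' => /(_ i); rewrite coef_deriv coef0 -mulr_natr.
  by move/eqP; rewrite mulf_eq0 (negbTE (F0 i)) orbF => /eqP.
have := Hd 0%N isT; rewrite derivn0 {1}Hf hornerC => H0.
by rewrite Hf H0.
Qed.

Lemma poly_all0 f : (forall m n : nat, (m%:R == n%:R :> F) = (m == n)) ->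
  (forall z, f.[z] = 0) -> f = 0.
Proof.
move=> natF Hz; apply: (@roots_geq_poly_eq0 _ f [seq i%:R | i <- iota 0 (size f)]).
- by apply/allP => y /mapP [i _ ->]; apply/rootP.
- rewrite map_inj_uniq ?iota_uniq // => m n /eqP; rewrite natF => /eqP.
  done.
- by rewrite size_map size_iota.
Qed.
End L.
Lemma sum_split (F : nmodType) (m r : nat) (G : nat -> F) :
  \sum_(0 <= n < m * r) G n = \sum_(j < m) \sum_(c < r) G (j * r + c)%N.
Proof.
elim: m => [|m IH]; first by rewrite mul0n big_geq // big_ord0.
rewrite mulSnr (big_cat_nat _ (leq_addr _ _)) //= IH big_ord_recr /=.
congr (_ + _).
rewrite -{1}[(m * r)%N]add0n big_addn addKn big_mkord.
by apply: eq_bigr => c _; rewrite addnC.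
Qed.

Section Main.
Variables (F : fieldType) (q r nu : nat).
Hypothesis natF : forall m n : nat, (m%:R == n%:R :> F) = (m == n).
Hypothesis q0 : (0 < q)%N.
Hypothesis r0 : (0 < r)%N.

Lemma F0 n : (n.+1%:R : F) != 0.
Proof. by rewrite -[0](mulr0n 1) natF. Qed.

Definition xf (x : 'rV[F]_(nu * r)) (n : nat) : F :=
  if (insub n : option 'I_(nu * r)) is Some k then x 0 k else 0.

Lemma xfE x (k : 'I_(nu * r)) : xf x k = x 0 k.
Proof. by rewrite /xf valK. Qed.

Definition g x j : {poly F} := \poly_(c < r) xf x (j * r + c)%N.
Definition p x a : {poly F} := \sum_(j < nu) ('X^a * g x j)^`(j).
Definition h x m : {poly F} := \sum_(j < nu) 'C(j, m)%:R *: (g x j)^`(j - m).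

Lemma p_h x a B : (nu <= B)%N ->
  p x a = \sum_(m < B) (a ^_ m)%:R *: ('X^(a - m) * h x m).
Proof.
move=> HB; rewrite /p.
under eq_bigr => j _ do rewrite (@leibXa _ a _ j B (leq_trans (ltn_ord j) HB)).
rewrite exchange_big /=; apply: eq_bigr => m _.
rewrite /h mulr_sumr scaler_sumr; apply: eq_bigr => j _.
by rewrite -scalerAr scalerA natrM mulrC.
Qed.

Lemma size_h x m : (size (h x m) <= r)%N.
Proof.
rewrite /h; apply: (big_ind (fun f : {poly F} => size f <= r)%N).
- by rewrite size_poly0.
- by move=> f1 f2 H1 H2; apply: leq_trans (size_polyD _ _) _; rewrite geq_max H1.
move=> j _; apply: leq_trans (size_scale_leq _ _) _.
have [->|nz] := eqVneq (g x j) 0; first by rewrite linear0 size_poly0.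
elim: (j - m)%N => [|k IH]; first by rewrite derivn0 size_poly.
rewrite derivnS; have [->|nz'] := eqVneq ((g x j)^`(k)) 0.
  by rewrite deriv0 size_poly0.
by apply: leq_trans (ltnW (lt_size_deriv nz')) IH.
Qed.

Lemma h0_p0 x : (forall m, (m < q)%N -> h x m = 0) ->
  forall a, (a < q)%N -> p x a = 0.
Proof.
move=> Hh a Ha; rewrite (@p_h x a (nu + q)) ?leq_addr //.
apply: big1 => m _; case: (ltnP m q) => Hm; first by rewrite Hh // mulr0 scaler0.
by rewrite ffact_small ?scale0r // (leq_trans Ha Hm).
Qed.

Lemma pder_h0 x z :
  (forall a i, (a < q)%N -> (i < r)%N -> ((p x a)^`(i)).[z] = 0) ->
  forall m, (m < q)%N -> h x m = 0.
Proof.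
move=> Hp m; elim/ltn_ind: m => m IH Hm.
have Hpm : p x m = (m`!)%:R *: h x m.
  rewrite (@p_h x m (nu + q)) ?leq_addr //.
  have HmB : (m < nu + q)%N by apply: leq_trans Hm (leq_addl _ _).
  rewrite (bigD1 (Ordinal HmB)) //= subnn expr0 mul1r ffactnn big1 ?addr0 //.
  move=> k /eqP Hk.
  case: (ltngtP k m) => Hkm.
  - by rewrite IH ?mulr0 ?scaler0 // (ltn_trans Hkm).
  - by rewrite ffact_small ?scale0r.
  - by exfalso; apply: Hk; apply: val_inj.
have Hp0 : p x m = 0.
  apply: (taylor (n:=r) (z:=z)) => [|i Hi|].
  - by rewrite Hpm; apply: leq_trans (size_scale_leq _ _) (size_h _ _).
  - by apply: Hp.
  - exact: F0.
move: Hp0; rewrite Hpm => /eqP; rewrite scaler_eq0 => /orP [|/eqP //].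
by rewrite -(prednK (fact_gt0 m)) (negbTE (F0 _)).
Qed.

Lemma g_zero x : (forall m, (m < q)%N -> h x m = 0) ->
  (forall j, (q <= j)%N -> (j < nu)%N -> g x j = 0) ->
  forall j, (j < nu)%N -> g x j = 0.
Proof.
move=> Hh Hq.
suff H : forall d j, (j < nu)%N -> (nu <= j + d)%N -> g x j = 0.
  by move=> j Hj; apply: (H nu) => //; rewrite leq_addl.
elim=> [|d IH] j Hj Hd; first by exfalso; move: Hd; rewrite addn0 leqNgt Hj.
case: (leqP nu (j + d)) => Hjd; first exact: IH.
case: (leqP q j) => Hjq; first exact: Hq.
have := Hh j Hjq; rewrite /h (bigD1 (Ordinal Hj)) //= subnn derivn0 binn scale1r.
rewrite big1 ?addr0 // => k /eqP Hk.
case: (ltngtP k j) => Hkj.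
- by rewrite bin_small ?scale0r.
- have -> : g x k = 0.
    apply: IH; first exact: ltn_ord.
    by apply: leq_trans Hd _; rewrite addnS -addSn leq_add2r.
  by rewrite linear0 scaler0.
- by exfalso; apply: Hk; apply: val_inj.
Qed.

Lemma x_zero x : (forall j, (j < nu)%N -> g x j = 0) -> x = 0.
Proof.
move=> Hg; apply/rowP => k; rewrite mxE -xfE.
have Hk : (k %/ r < nu)%N by rewrite ltn_divLR // ltn_ord.
have := Hg _ Hk; move/polyP => /(_ (k %% r)%N).
by rewrite coef_poly ltn_pmod // coef0 -divn_eq.
Qed.

Lemma entry_gen (x : 'rV[F]_(nu * r)) (z : F) (i a : nat) :
  \sum_(k < nu * r) mder (i + k %/ r) a (k %% r) z * x 0 k =
  ((p x a)^`(i)).[z].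
Proof.
under eq_bigr => k _ do rewrite -xfE.
rewrite -(big_mkord xpredT (fun n => mder (i + n %/ r) a (n %% r) z * xf x n)).
rewrite sum_split /p raddf_sum horner_sum; apply: eq_bigr => j _.
rewrite [X in X.[z]](_ : _ = ('X^a * g x j)^`(i + j)); last exact: derivn_comp.
rewrite /g poly_def mulr_sumr raddf_sum horner_sum.
apply: eq_bigr => c _.
rewrite divnMDl // modnMDl divn_small // modn_small // addn0.
by rewrite -scalerAr -exprD /= linearZ /= hornerZ mulrC.
Qed.

Lemma Mcal0_entry (x : 'rV[F]_(nu * r)) (z : F) (a : 'I_q) :
  (Mcal0 q r nu z *m x^T) a 0 = (p x a).[z].
Proof.
rewrite !mxE -[p x a]derivn0 -entry_gen; apply: eq_bigr => k _.
by rewrite !mxE.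
Qed.

Lemma Mcal_entry (x : 'rV[F]_(nu * r)) (z : F) (row : 'I_(r * q)) :
  (Mcal q r nu r z *m x^T) row 0 = ((p x (row %% q))^`(row %/ q)).[z].
Proof.
rewrite !mxE -entry_gen; apply: eq_bigr => k _.
by rewrite !mxE.
Qed.

Lemma cV0 m (M : 'cV[F]_m) : (forall a, M a 0 = 0) -> M = 0.
Proof. by move=> H; apply/matrixP => a j; rewrite ord1 H mxE. Qed.

Lemma E1_E3 (x : 'rV[F]_(nu * r)) :
  (forall z, Mcal0 q r nu z *m x^T = 0) <-> (forall m, (m < q)%N -> h x m = 0).
Proof.
split=> [H|H z].
  apply: (pder_h0 (z := 0)) => a i Ha Hi.
  have -> : p x a = 0.
    apply: poly_all0 => // z.
    by rewrite -(Mcal0_entry x z (Ordinal Ha)) H mxE.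
  by rewrite linear0 horner0.
by apply: cV0 => a; rewrite Mcal0_entry h0_p0 ?horner0.
Qed.

Lemma E2_E3 (x : 'rV[F]_(nu * r)) (z : F) :
  (Mcal q r nu r z *m x^T = 0) <-> (forall m, (m < q)%N -> h x m = 0).
Proof.
split=> [H|H].
  apply: (pder_h0 (z := z)) => a i Ha Hi.
  have Hrow : (i * q + a < r * q)%N.
    apply: (@leq_trans (i.+1 * q)%N); first by rewrite mulSn [(q + _)%N]addnC ltn_add2l.
    by rewrite leq_mul2r Hi orbT.
  have := Mcal_entry x z (Ordinal Hrow); rewrite H mxE /=.
  by rewrite modnMDl modn_small // divnMDl // divn_small // addn0.
apply: cV0 => row; rewrite Mcal_entry h0_p0 ?ltn_pmod //.
by rewrite linear0 horner0.
Qed.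

Lemma shift_lt (k : 'I_((nu - q) * r)) : (q * r + k < nu * r)%N.
Proof.
move: (nat_of_ord k) (ltn_ord k) => {}k Hk.
case: (leqP q nu) => Hq.
  by rewrite -(subnKC Hq) mulnDl ltn_add2l.
have H0 : (nu - q = 0)%N by apply/eqP; rewrite subn_eq0 ltnW.
by move: Hk; rewrite H0.
Qed.

Definition Psel : 'M[F]_(nu * r, (nu - q) * r) :=
  \matrix_(i, k) ((i : nat) == (q * r + k)%N)%:R.

Lemma Psel_entry (x : 'rV[F]_(nu * r)) k : (x *m Psel) 0 k = xf x (q * r + k).
Proof.
rewrite mxE (bigD1 (Ordinal (shift_lt k))) //= !mxE eqxx mulr1 -xfE /=.
rewrite big1 ?addr0 // => i Hi; rewrite mxE.
case: eqP => [Heq|]; last by rewrite mulr0.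
by exfalso; move/eqP: Hi; apply; apply: val_inj.
Qed.

Lemma ker_P_zero (x : 'rV[F]_(nu * r)) :
  (forall m, (m < q)%N -> h x m = 0) -> x *m Psel = 0 -> x = 0.
Proof.
move=> Hh HP; apply: x_zero; apply: g_zero => // j Hqj Hj.
apply/polyP => c; rewrite coef_poly coef0; case: ifP => // Hc.
have Hk : ((j - q) * r + c < (nu - q) * r)%N.
  apply: (@leq_trans ((j - q).+1 * r)); first by rewrite mulSn [(r + _)%N]addnC ltn_add2l.
  by rewrite leq_mul2r -subSn // leq_sub2r ?orbT.
have := Psel_entry x (Ordinal Hk); rewrite HP mxE /= addnA -mulnDl subnKC //; by move=> ->.
Qed.
End Main.

Lemma trT (F : fieldType) m n (M : 'M[F]_(m, n)) (x : 'rV[F]_n) :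
  (x *m M^T = 0) <-> (M *m x^T = 0).
Proof.
rewrite -[x *m M^T]trmxK trmx_mul !trmxK.
by split=> [H|->]; [rewrite -[M *m _]trmxK H trmx0 | rewrite trmx0].
Qed.

Unset Implicit Arguments.
Set Strict Implicit.

Theorem lemma7p3 (R : realType) (q r nu : nat) :
  (0 < q)%N -> (0 < r)%N -> (0 < nu)%N ->
  exists K : 'M[Cplx R]_(nu * r),
    [/\ forall x : 'rV[Cplx R]_(nu * r),
          (x <= K)%MS <-> (forall z : Cplx R, Mcal0 q r nu z *m x^T = 0),
        \rank K = ((nu - q) * r)%N
      & forall z : Cplx R, (K == kermx (Mcal q r nu r z)^T)%MS].
Proof.
move=> q0 r0 nu0.
have natF : forall m n : nat, (m%:R == n%:R :> Cplx R) = (m == n).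
  by move=> m n; exact: (@eqr_nat (R[i]) m n).
set K := kermx (Mcal q r nu r (0 : Cplx R))^T.
have memK : forall z (x : 'rV[Cplx R]_(nu * r)),
    (x <= kermx (Mcal q r nu r z)^T)%MS <-> (forall m, (m < q)%N -> h x m = 0).
  move=> z x; split.
    by move/sub_kermxP/trT/(E2_E3 natF q0 r0 x z).
  by move/(E2_E3 natF q0 r0 x z)/trT/sub_kermxP.
exists K; split.
- move=> x; rewrite (@E1_E3 _ q r nu natF r0 x); exact: memK.
- apply/eqP; rewrite eqn_leq; apply/andP; split.
    rewrite -(mxrank_mul_ker K (@Psel (Cplx R) q r nu)).
    have -> : \rank (K :&: kermx (@Psel (Cplx R) q r nu))%MS = 0%N.
      set S := (K :&: kermx (@Psel (Cplx R) q r nu))%MS.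
      suff -> : S = 0 by rewrite mxrank0.
      apply/row_matrixP => i; rewrite row0.
      apply: (ker_P_zero r0).
        apply/(memK 0); apply: submx_trans (row_sub i S) _; exact: capmxSl.
      apply/sub_kermxP; apply: submx_trans (row_sub i S) _; exact: capmxSr.
    by rewrite addn0 rank_leq_col.
  by rewrite /K mxrank_ker mulnBl [(q * r)%N]mulnC leq_sub2l ?rank_leq_col.
- move=> z; apply/andP; split; apply/rV_subP => v.
    by move/(memK 0) => H; apply/(memK z).
  by move/(memK z) => H; apply/(memK 0).
Qed.
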